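(* Let $\alpha_i,\beta_i,\gamma_i,\delta_i\in(0,\pi)$ satisfy $\alpha_i\pm\beta_i\pm\gamma_i\pm\delta_i\not\equiv0\pmod{2\pi}$ for all sign choices, and suppose $M_i>0$. Then $\overline{\alpha}_i,\overline{\beta}_i,\overline{\gamma}_i,\overline{\delta}_i\in(0,\pi)$ and \[r_i,\ s_i,\ f_i,\ (r_i-1)(r_i-M_i),\ (s_i-1)(s_i-M_i),\ (f_i-1)(f_i-M_i),\ (r_i-1)(s_i-1)(f_i-1)(1-M_i)\] are all strictly positive.
   Context: $\sigma_i=(\alpha_i+\beta_i+\gamma_i+\delta_i)/2$, $\overline{\alpha}_i=\sigma_i-\alpha_i$, $\overline{\beta}_i=\sigma_i-\beta_i$, $\overline{\gamma}_i=\sigma_i-\gamma_i$, $\overline{\delta}_i=\sigma_i-\delta_i$; $a_i=\sin\alpha_i/\sin\overline{\alpha}_i$, $b_i=\sin\beta_i/\sin\overline{\beta}_i$, $c_i=\sin\gamma_i/\sin\overline{\gamma}_i$, $d_i=\sin\delta_i/\sin\overline{\delta}_i$, $M_i=a_ib_ic_id_i$, $r_i=a_id_i$, $s_i=c_id_i$, $f_i=a_ic_i$. *)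

(* Defs.v *)
From Stdlib Require Import Reals.
Open Scope R_scope.

Definition sigma (al be ga de : R) : R := (al + be + ga + de) / 2.
Definition albar (al be ga de : R) : R := sigma al be ga de - al.
Definition bebar (al be ga de : R) : R := sigma al be ga de - be.
Definition gabar (al be ga de : R) : R := sigma al be ga de - ga.
Definition debar (al be ga de : R) : R := sigma al be ga de - de.

Definition ca (al be ga de : R) : R := sin al / sin (albar al be ga de).
Definition cb (al be ga de : R) : R := sin be / sin (bebar al be ga de).
Definition cc (al be ga de : R) : R := sin ga / sin (gabar al be ga de).
Definition cd (al be ga de : R) : R := sin de / sin (debar al be ga de).

Definition cM (al be ga de : R) : R :=
  ca al be ga de * cb al be ga de * cc al be ga de * cd al be ga de.
Definition cr (al be ga de : R) : R := ca al be ga de * cd al be ga de.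
Definition cs (al be ga de : R) : R := cc al be ga de * cd al be ga de.
Definition cf (al be ga de : R) : R := ca al be ga de * cc al be ga de.

Definition sgn (b : bool) : R := if b then 1 else -1.

(* Main.v *)
Require Import Defs.
From Stdlib Require Import Reals Lra Psatz.
Open Scope R_scope.

Lemma sin_nz (x : R) : -PI < x < PI -> x <> 0 -> sin x <> 0.
Proof.
  intros [h1 h2] h3.
  destruct (Rlt_or_le 0 x) as [hp|hn].
  - pose proof (sin_gt_0 x hp h2). lra.
  - assert (x < 0) by lra. pose proof (sin_lt_0_var x h1 H). lra.
Qed.

Lemma prod_sin (x y : R) : sin x * sin y = (cos (x - y) - cos (x + y)) / 2.
Proof. rewrite cos_minus, cos_plus. field. Qed.

Lemma div_nonpos (s y : R) : 0 < s -> y <= 0 -> s / y <= 0.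
Proof.
  intros hs hy. destruct (Req_dec y 0) as [e|ne].
  - subst. unfold Rdiv. rewrite Rinv_0. lra.
  - unfold Rdiv. assert (/ y < 0) by (apply Rinv_lt_0_compat; lra). nra.
Qed.

Lemma div_pos (s y : R) : 0 < s -> 0 < y -> 0 < s / y.
Proof. intros. unfold Rdiv. apply Rmult_lt_0_compat; auto. apply Rinv_0_lt_compat; auto. Qed.

Lemma key (s1 s2 s3 s4 x1 x2 x3 x4 : R) :
  0 < s1 -> 0 < s2 -> 0 < s3 -> 0 < s4 ->
  -PI < x1 < 2 * PI ->
  0 < x1 + x2 < 2 * PI -> -PI < x1 - x2 < PI ->
  0 < x1 + x3 < 2 * PI -> -PI < x1 - x3 < PI ->
  0 < x1 + x4 < 2 * PI -> -PI < x1 - x4 < PI ->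
  0 < s1 / sin x1 * (s2 / sin x2) * (s3 / sin x3) * (s4 / sin x4) ->
  0 < x1 < PI.
Proof.
  intros h1 h2 h3 h4 hx a2 b2 a3 b3 a4 b4 hp.
  pose proof PI_RGT_0.
  destruct (Rlt_or_le 0 x1) as [p1|n1]; destruct (Rlt_or_le x1 PI) as [p2|n2];
    try (split; assumption); exfalso.
  - assert (sin x1 <= 0) by (apply sin_le_0; lra).
    assert (0 < sin x2) by (apply sin_gt_0; lra).
    assert (0 < sin x3) by (apply sin_gt_0; lra).
    assert (0 < sin x4) by (apply sin_gt_0; lra).
    pose proof (div_nonpos s1 (sin x1) h1 H0).
    pose proof (div_pos s2 _ h2 H1). pose proof (div_pos s3 _ h3 H2).
    pose proof (div_pos s4 _ h4 H3).
    assert (0 < s2 / sin x2 * (s3 / sin x3) * (s4 / sin x4)) by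
      (apply Rmult_lt_0_compat; [apply Rmult_lt_0_compat|]; assumption).
    revert hp. set (q := s2 / sin x2 * (s3 / sin x3) * (s4 / sin x4)) in *.
    replace (s1 / sin x1 * (s2 / sin x2) * (s3 / sin x3) * (s4 / sin x4)) with (s1 / sin x1 * q) by (unfold q; ring).
    intro. nra.
  - assert (sin x1 <= 0).
    { destruct (Req_dec x1 0) as [e|e]. subst. rewrite sin_0. lra.
      assert (sin x1 < 0) by (apply sin_lt_0_var; lra). lra. }
    assert (0 < sin x2) by (apply sin_gt_0; lra).
    assert (0 < sin x3) by (apply sin_gt_0; lra).
    assert (0 < sin x4) by (apply sin_gt_0; lra).
    pose proof (div_nonpos s1 (sin x1) h1 H0).
    pose proof (div_pos s2 _ h2 H1). pose proof (div_pos s3 _ h3 H2).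
    pose proof (div_pos s4 _ h4 H3).
    assert (0 < s2 / sin x2 * (s3 / sin x3) * (s4 / sin x4)) by
      (apply Rmult_lt_0_compat; [apply Rmult_lt_0_compat|]; assumption).
    revert hp. set (q := s2 / sin x2 * (s3 / sin x3) * (s4 / sin x4)) in *.
    replace (s1 / sin x1 * (s2 / sin x2) * (s3 / sin x3) * (s4 / sin x4)) with (s1 / sin x1 * q) by (unfold q; ring).
    intro. nra.
  - lra.
Qed.

Lemma alg1 (r m X K L : R) : 0 < r -> 0 < K -> 0 < L -> X <> 0 ->
  r - 1 = X / (2 * K) -> r - m = r * X / (2 * L) -> 0 < (r - 1) * (r - m).
Proof.
  intros hr hK hL hX e1 e2. rewrite e1, e2.
  replace (X / (2 * K) * (r * X / (2 * L))) with ((X * X) * r / (4 * K * L)) by (field; lra).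
  apply div_pos. 2: { repeat apply Rmult_lt_0_compat; lra. } apply Rmult_lt_0_compat; auto.
  pose proof (Rsqr_pos_lt _ hX). unfold Rsqr in *. lra.
Qed.

Lemma alg2 (r s f m X Y Z W K1 K2 K3 K4 : R) :
  0 < K1 -> 0 < K2 -> 0 < K3 -> 0 < K4 -> X <> 0 -> 0 < Y * Z * W ->
  r - 1 = X / (2 * K1) -> s - 1 = Y / (2 * K2) -> f - 1 = Z / (2 * K3) ->
  1 - m = X * W / (4 * K4) ->
  0 < (r - 1) * (s - 1) * (f - 1) * (1 - m).
Proof.
  intros h1 h2 h3 h4 hX hp e1 e2 e3 e4. rewrite e1, e2, e3, e4.
  replace (X / (2 * K1) * (Y / (2 * K2)) * (Z / (2 * K3)) * (X * W / (4 * K4)))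
    with ((X * X) * (Y * Z * W) / (32 * K1 * K2 * K3 * K4)) by (field; repeat split; lra).
  apply div_pos. 2: { repeat apply Rmult_lt_0_compat; lra. } apply Rmult_lt_0_compat; auto.
  pose proof (Rsqr_pos_lt _ hX). unfold Rsqr in *. lra.
Qed.

Theorem lemma4 (al be ga de : R) :
  0 < al < PI -> 0 < be < PI -> 0 < ga < PI -> 0 < de < PI ->
  (forall (s1 s2 s3 : bool) (k : Z),
      al + sgn s1 * be + sgn s2 * ga + sgn s3 * de <> 2 * IZR k * PI) ->
  0 < cM al be ga de ->
  (0 < albar al be ga de < PI /\ 0 < bebar al be ga de < PI /\
   0 < gabar al be ga de < PI /\ 0 < debar al be ga de < PI) /\
  (0 < cr al be ga de /\ 0 < cs al be ga de /\ 0 < cf al be ga de /\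
   0 < (cr al be ga de - 1) * (cr al be ga de - cM al be ga de) /\
   0 < (cs al be ga de - 1) * (cs al be ga de - cM al be ga de) /\
   0 < (cf al be ga de - 1) * (cf al be ga de - cM al be ga de) /\
   0 < (cr al be ga de - 1) * (cs al be ga de - 1) * (cf al be ga de - 1)
       * (1 - cM al be ga de)).
Proof.
  intros Ha Hb Hc Hd Hg HM.
  pose proof PI_RGT_0 as Hpi.
  assert (g1 : al + be + ga + de <> 2 * PI).
  { intro e. apply (Hg true true true 1%Z). simpl. lra. }
  assert (g2 : al + be - ga - de <> 0).
  { intro e. apply (Hg true false false 0%Z). simpl. lra. }
  assert (g3 : al - be + ga - de <> 0).
  { intro e. apply (Hg false true false 0%Z). simpl. lra. }
  assert (g4 : al - be - ga + de <> 0).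
  { intro e. apply (Hg false false true 0%Z). simpl. lra. }
  unfold cM, ca, cb, cc, cd in HM.
  unfold cr, cs, cf, cM, ca, cb, cc, cd.
  unfold albar, bebar, gabar, debar, Defs.sigma in *.
  set (sg := (al + be + ga + de) / 2) in *.
  assert (sa : 0 < sin al) by (apply sin_gt_0; lra).
  assert (sb : 0 < sin be) by (apply sin_gt_0; lra).
  assert (sc : 0 < sin ga) by (apply sin_gt_0; lra).
  assert (sd : 0 < sin de) by (apply sin_gt_0; lra).
  assert (Ba : 0 < sg - al < PI).
  { apply (key (sin al) (sin be) (sin ga) (sin de) _ (sg - be) (sg - ga) (sg - de));
      auto; unfold sg; lra. }
  assert (Bb : 0 < sg - be < PI).
  { apply (key (sin be) (sin al) (sin ga) (sin de) _ (sg - al) (sg - ga) (sg - de));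
      try (unfold sg; lra); auto.
    replace (sin be / sin (sg - be) * (sin al / sin (sg - al)) * (sin ga / sin (sg - ga)) *
             (sin de / sin (sg - de))) with
      (sin al / sin (sg - al) * (sin be / sin (sg - be)) * (sin ga / sin (sg - ga)) *
       (sin de / sin (sg - de))) by ring. auto. }
  assert (Bc : 0 < sg - ga < PI).
  { apply (key (sin ga) (sin al) (sin be) (sin de) _ (sg - al) (sg - be) (sg - de));
      try (unfold sg; lra); auto.
    replace (sin ga / sin (sg - ga) * (sin al / sin (sg - al)) * (sin be / sin (sg - be)) *
             (sin de / sin (sg - de))) with
      (sin al / sin (sg - al) * (sin be / sin (sg - be)) * (sin ga / sin (sg - ga)) *
       (sin de / sin (sg - de))) by ring. auto. }
  assert (Bd : 0 < sg - de < PI).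
  { apply (key (sin de) (sin al) (sin be) (sin ga) _ (sg - al) (sg - be) (sg - ga));
      try (unfold sg; lra); auto.
    replace (sin de / sin (sg - de) * (sin al / sin (sg - al)) * (sin be / sin (sg - be)) *
             (sin ga / sin (sg - ga))) with
      (sin al / sin (sg - al) * (sin be / sin (sg - be)) * (sin ga / sin (sg - ga)) *
       (sin de / sin (sg - de))) by ring. auto. }
  split. { repeat split; lra. }
  assert (ta : 0 < sin (sg - al)) by (apply sin_gt_0; lra).
  assert (tb : 0 < sin (sg - be)) by (apply sin_gt_0; lra).
  assert (tc : 0 < sin (sg - ga)) by (apply sin_gt_0; lra).
  assert (td : 0 < sin (sg - de)) by (apply sin_gt_0; lra).
  assert (F1 : sin al * sin de - sin (sg - al) * sin (sg - de)
               = (cos (be + ga) - cos (al + de)) / 2).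
  { rewrite !prod_sin. replace (sg - al + (sg - de)) with (be + ga) by (unfold sg; lra).
    replace (sg - al - (sg - de)) with (de - al) by lra.
    replace (de - al) with (- (al - de)) by ring. rewrite cos_neg. lra. }
  assert (F2 : sin be * sin ga - sin (sg - be) * sin (sg - ga)
               = (cos (al + de) - cos (be + ga)) / 2).
  { rewrite !prod_sin. replace (sg - be + (sg - ga)) with (al + de) by (unfold sg; lra).
    replace (sg - be - (sg - ga)) with (- (be - ga)) by lra. rewrite cos_neg. lra. }
  assert (F3 : sin ga * sin de - sin (sg - ga) * sin (sg - de)
               = (cos (al + be) - cos (ga + de)) / 2).
  { rewrite !prod_sin. replace (sg - ga + (sg - de)) with (al + be) by (unfold sg; lra).
    replace (sg - ga - (sg - de)) with (- (ga - de)) by lra. rewrite cos_neg. lra. }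
  assert (F4 : sin al * sin ga - sin (sg - al) * sin (sg - ga)
               = (cos (be + de) - cos (al + ga)) / 2).
  { rewrite !prod_sin. replace (sg - al + (sg - ga)) with (be + de) by (unfold sg; lra).
    replace (sg - al - (sg - ga)) with (- (al - ga)) by lra. rewrite cos_neg. lra. }
  assert (G1 : sin (sg - al) * sin (sg - de) = (cos (al - de) - cos (be + ga)) / 2).
  { rewrite !prod_sin. replace (sg - al + (sg - de)) with (be + ga) by (unfold sg; lra).
    replace (sg - al - (sg - de)) with (- (al - de)) by lra. rewrite cos_neg. lra. }
  assert (G2 : sin (sg - be) * sin (sg - ga) = (cos (be - ga) - cos (al + de)) / 2).
  { rewrite !prod_sin. replace (sg - be + (sg - ga)) with (al + de) by (unfold sg; lra).
    replace (sg - be - (sg - ga)) with (- (be - ga)) by lra. rewrite cos_neg. lra. }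
  set (e3 := sin ((al + de - be - ga) / 2)).
  set (h1 := sin ((al + be - ga - de) / 2)).
  set (h2 := sin ((al + ga - be - de) / 2)).
  assert (H1 : cos (be + ga) - cos (al + de) = 2 * sin sg * e3).
  { rewrite form2. unfold e3, sg.
    replace ((be + ga - (al + de)) / 2) with (- ((al + de - be - ga) / 2)) by field.
    rewrite sin_neg. replace ((be + ga + (al + de)) / 2) with ((al + be + ga + de) / 2) by field.
    ring. }
  assert (H2 : cos (al + be) - cos (ga + de) = -2 * sin sg * h1).
  { rewrite form2. unfold h1, sg.
    replace ((al + be - (ga + de)) / 2) with ((al + be - ga - de) / 2) by field.
    replace ((al + be + (ga + de)) / 2) with ((al + be + ga + de) / 2) by field.
    ring. }
  assert (H3 : cos (be + de) - cos (al + ga) = 2 * sin sg * h2).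
  { rewrite form2. unfold h2, sg.
    replace ((be + de - (al + ga)) / 2) with (- ((al + ga - be - de) / 2)) by field.
    rewrite sin_neg. replace ((be + de + (al + ga)) / 2) with ((al + be + ga + de) / 2) by field.
    ring. }
  assert (H4 : cos (al - de) - cos (be - ga) = -2 * h1 * h2).
  { rewrite form2. unfold h1, h2.
    replace ((al - de - (be - ga)) / 2) with ((al + ga - be - de) / 2) by field.
    replace ((al - de + (be - ga)) / 2) with ((al + be - ga - de) / 2) by field.
    ring. }
  assert (nsg : sin sg <> 0).
  { destruct (Rlt_or_le sg PI).
    - pose proof (sin_gt_0 sg). unfold sg in *. lra.
    - pose proof (sin_lt_0 sg). unfold sg in *. lra. }
  assert (n3 : e3 <> 0) by (apply sin_nz; lra).
  assert (n1 : h1 <> 0) by (apply sin_nz; lra).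
  assert (n2 : h2 <> 0) by (apply sin_nz; lra).
  set (A1 := sin al) in *. set (A2 := sin be) in *. set (A3 := sin ga) in *. set (A4 := sin de) in *.
  set (T1 := sin (sg - al)) in *. set (T2 := sin (sg - be)) in *.
  set (T3 := sin (sg - ga)) in *. set (T4 := sin (sg - de)) in *.
  assert (F5 : A1 * A2 - T1 * T2 = (cos (ga + de) - cos (al + be)) / 2).
  { unfold A1, A2, T1, T2. rewrite !prod_sin. replace (sg - al + (sg - be)) with (ga + de) by (unfold sg; lra).
    replace (sg - al - (sg - be)) with (- (al - be)) by lra. rewrite cos_neg. lra. }
  assert (F6 : A2 * A4 - T2 * T4 = (cos (al + ga) - cos (be + de)) / 2).
  { unfold A2, A4, T2, T4. rewrite !prod_sin. replace (sg - be + (sg - de)) with (al + ga) by (unfold sg; lra).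
    replace (sg - be - (sg - de)) with (- (be - de)) by lra. rewrite cos_neg. lra. }
  set (X := cos (be + ga) - cos (al + de)) in *.
  set (Y := cos (al + be) - cos (ga + de)) in *.
  set (Z := cos (be + de) - cos (al + ga)) in *.
  set (W := cos (al - de) - cos (be - ga)) in *.
  assert (nX : X <> 0). { rewrite H1. intro e. apply Rmult_integral in e as [e|e]; [apply Rmult_integral in e as [e|e]|]; lra. }
  assert (nY : Y <> 0). { rewrite H2. intro e. apply Rmult_integral in e as [e|e]; [apply Rmult_integral in e as [e|e]|]; lra. }
  assert (nZ : Z <> 0). { rewrite H3. intro e. apply Rmult_integral in e as [e|e]; [apply Rmult_integral in e as [e|e]|]; lra. }
  assert (pYZW : 0 < Y * Z * W).
  { rewrite H2, H3, H4.
    replace (-2 * sin sg * h1 * (2 * sin sg * h2) * (-2 * h1 * h2)) with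
      (8 * ((sin sg * h1 * h2) * (sin sg * h1 * h2))) by ring.
    assert (sin sg * h1 * h2 <> 0).
    { intro e. apply Rmult_integral in e as [e|e]; [apply Rmult_integral in e as [e|e]|]; lra. }
    pose proof (Rsqr_pos_lt _ H). unfold Rsqr in *. lra. }
  assert (F2' : A2 * A3 - T2 * T3 = - X / 2) by (unfold X; lra).
  assert (F5' : A1 * A2 - T1 * T2 = - Y / 2) by (unfold Y; lra).
  assert (F6' : A2 * A4 - T2 * T4 = - Z / 2) by (unfold Z; lra).
  assert (G' : T1 * T4 = T2 * T3 + (W - X) / 2) by (rewrite G1, G2; unfold X, W; lra).
  clear F2 F5 F6 G1 G2.
  clearbody A1 A2 A3 A4 T1 T2 T3 T4 X Y Z W.
  assert (nT1 : T1 <> 0) by lra. assert (nT2 : T2 <> 0) by lra.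
  assert (nT3 : T3 <> 0) by lra. assert (nT4 : T4 <> 0) by lra.
  assert (pa : 0 < A1 / T1) by (apply div_pos; auto).
  assert (pb : 0 < A2 / T2) by (apply div_pos; auto).
  assert (pc : 0 < A3 / T3) by (apply div_pos; auto).
  assert (pd : 0 < A4 / T4) by (apply div_pos; auto).
  split; [apply Rmult_lt_0_compat; auto|].
  split; [apply Rmult_lt_0_compat; auto|].
  split; [apply Rmult_lt_0_compat; auto|].
  split.
  { apply (alg1 _ _ X (T1 * T4) (T2 * T3)); auto.
    - apply Rmult_lt_0_compat; auto.
    - apply Rmult_lt_0_compat; auto.
    - apply Rmult_lt_0_compat; auto.
    - replace X with (2 * (A1 * A4 - T1 * T4)) by lra. field; auto.
    - replace X with (2 * (T2 * T3 - A2 * A3)) by lra. field; auto. }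
  split.
  { apply (alg1 _ _ Y (T3 * T4) (T1 * T2)); auto.
    - apply Rmult_lt_0_compat; auto.
    - apply Rmult_lt_0_compat; auto.
    - apply Rmult_lt_0_compat; auto.
    - replace Y with (2 * (A3 * A4 - T3 * T4)) by lra. field; auto.
    - replace Y with (2 * (T1 * T2 - A1 * A2)) by lra. field; auto. }
  split.
  { apply (alg1 _ _ Z (T1 * T3) (T2 * T4)); auto.
    - apply Rmult_lt_0_compat; auto.
    - apply Rmult_lt_0_compat; auto.
    - apply Rmult_lt_0_compat; auto.
    - replace Z with (2 * (A1 * A3 - T1 * T3)) by lra. field; auto.
    - replace Z with (2 * (T2 * T4 - A2 * A4)) by lra. field; auto. }
  apply (alg2 _ _ _ _ X Y Z W (T1 * T4) (T3 * T4) (T1 * T3) (T1 * T2 * T3 * T4)); auto.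
  - apply Rmult_lt_0_compat; auto.
  - apply Rmult_lt_0_compat; auto.
  - apply Rmult_lt_0_compat; auto.
  - repeat apply Rmult_lt_0_compat; auto.
  - replace X with (2 * (A1 * A4 - T1 * T4)) by lra. field; auto.
  - replace Y with (2 * (A3 * A4 - T3 * T4)) by lra. field; auto.
  - replace Z with (2 * (A1 * A3 - T1 * T3)) by lra. field; auto.
  - assert (e1 : A1 * A4 = T1 * T4 + X / 2) by lra.
    assert (e2 : A2 * A3 = T2 * T3 - X / 2) by lra.
    assert (e5 : T1 * T4 = T2 * T3 + (W - X) / 2) by exact G'.
    replace (1 - A1 / T1 * (A2 / T2) * (A3 / T3) * (A4 / T4)) with
      ((T1 * T4 * (T2 * T3) - (A1 * A4) * (A2 * A3)) / (T1 * T2 * T3 * T4)) by (field; auto).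
    rewrite e1, e2, e5. field. repeat split; auto.
Qed.
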